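(* Let $(X,\mathcal{A})$ be a $(v,k,\lambda)$-BIBD. Then $(X,\mathcal{A})$ has a perfect nesting if and only if $(X,\mathcal{A})$ is a Banff design having an exact colouring.
   Context: A $(v,k,\lambda)$-BIBD is a pair $(X,\mathcal{A})$ where $X$ is a set of $v$ points and $\mathcal{A}$ is a multiset of $k$-subsets of $X$ (blocks) such that every pair of distinct points lies in exactly $\lambda$ blocks. A perfect nesting of $(X,\mathcal{A})$ is a map $\phi:\mathcal{A}\to X$ with $\phi(A)\notin A$ for all $A$ such that $(X,\{A\cup\{\phi(A)\}:A\in\mathcal{A}\})$ is a $(v,k+1,\lambda+1)$-BIBD. The Levi graph $\mathcal{L}(X,\mathcal{A})$ is the bipartite graph with vertex set $X\cup\mathcal{A}$ (each block a separate vertex) and an edge $\{x,A\}$ whenever $x\in A$. A harmonious colouring of a graph is a map $c$ from vertices to colours such that adjacent vertices receive different colours and no two distinct edges receive the same unordered pair of colours; the harmonious chromatic number $h$ is the minimum number of colours in a harmonious colouring. $(X,\mathcal{A})$ is a Banff design if $h(\mathcal{L}(X,\mathcal{A}))=v$; a Banff design has an exact colouring if there is a harmonious colouring of $\mathcal{L}(X,\mathcal{A})$ with $v$ colours in which every pair of distinct colours occurs on exactly one edge. *)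

(* Defs.v *)
From mathcomp Require Import all_boot.
Set Implicit Arguments. Unset Strict Implicit. Unset Printing Implicit Defensive.

(* A design: points are the elements of a finType T (so v = #|T|); blocks are
   indexed by a finType B (so repeated blocks are allowed: a multiset), block
   A being the point set blk A. *)
Definition is_bibd (T B : finType) (blk : B -> {set T}) (v k lam : nat) : Prop :=
  [/\ #|T| = v,
      (forall A : B, #|blk A| = k) &
      (forall x y : T, x != y ->
         #|[set A : B | (x \in blk A) && (y \in blk A)]| = lam)].

Definition perfect_nesting (T B : finType) (blk : B -> {set T}) (v k lam : nat)
  (phi : B -> T) : Prop :=
  (forall A : B, phi A \notin blk A) /\
  is_bibd (fun A => phi A |: blk A) v k.+1 lam.+1.

Definition has_perfect_nesting (T B : finType) (blk : B -> {set T}) (v k lam : nat) :=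
  exists phi : B -> T, perfect_nesting blk v k lam phi.

Definition is_edge (V : finType) (e : rel V) (E : {set V}) : bool :=
  [exists u : V, exists w : V, e u w && (E == [set u; w])].

Definition harmonious (V : finType) (e : rel V) (n : nat) (c : V -> 'I_n) : Prop :=
  (forall u w : V, e u w -> c u != c w) /\
  (forall u1 w1 u2 w2 : V, e u1 w1 -> e u2 w2 ->
     [set c u1; c w1] = [set c u2; c w2] -> [set u1; w1] = [set u2; w2]).

Definition harmonious_with (V : finType) (e : rel V) (n : nat) : Prop :=
  exists c : V -> 'I_n, harmonious e c.

Definition harm_chrom_num_is (V : finType) (e : rel V) (n : nat) : Prop :=
  harmonious_with e n /\ (forall m, m < n -> ~ harmonious_with e m).

(* Levi graph: vertices are points (inl) and blocks (inr), each block a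
   separate vertex; x ~ A iff x \in A. *)
Definition levi_adj (T B : finType) (blk : B -> {set T}) : rel (T + B) :=
  fun a b =>
    match a, b with
    | inl x, inr A => x \in blk A
    | inr A, inl x => x \in blk A
    | _, _ => false
    end.

Definition banff (T B : finType) (blk : B -> {set T}) : Prop :=
  harm_chrom_num_is (levi_adj blk) #|T|.

Definition exact_colouring (T B : finType) (blk : B -> {set T})
  (c : T + B -> 'I_#|T|) : Prop :=
  harmonious (levi_adj blk) c /\
  (forall i j : 'I_#|T|, i != j ->
     #|[set E : {set T + B} | is_edge (levi_adj blk) E &&
                               ([set c u | u in E] == [set i; j])]| = 1).

Definition has_exact_colouring (T B : finType) (blk : B -> {set T}) : Prop :=
  exists c, exact_colouring blk c.

(* Main.v *)
Require Import Defs.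
From mathcomp Require Import all_boot zify.
Set Implicit Arguments. Unset Strict Implicit. Unset Printing Implicit Defensive.

Lemma set2_eq (U : finType) (a b a' b' : U) :
  [set a; b] = [set a'; b'] -> (a = a' /\ b = b') \/ (a = b' /\ b = a').
Proof.
move=> E.
have Ha : a \in [set a'; b'] by rewrite -E !inE eqxx.
have Hb : b \in [set a'; b'] by rewrite -E !inE eqxx orbT.
have Ha' : a' \in [set a; b] by rewrite E !inE eqxx.
have Hb' : b' \in [set a; b] by rewrite E !inE eqxx orbT.
move: Ha Hb Ha' Hb'; rewrite !inE.
by do 4! case/orP=> /eqP ?; subst; auto.
Qed.

Lemma set2_sym_ex (U : finType) (a b : U) : [set a; b] = [set b; a].
Proof. by rewrite setUC. Qed.

Lemma imset_set2 (U V : finType) (f : U -> V) (a b : U) :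
  [set f x | x in [set a; b]] = [set f a; f b].
Proof. by rewrite imsetU1 imset_set1. Qed.

Definition P2 (U : finType) := [set S : {set U} | #|S| == 2].

Lemma card_P2 (U : finType) : #|P2 U| = 'C(#|U|, 2).
Proof. by rewrite /P2 card_draws. Qed.

Lemma bin2_lt m n : m < n -> 1 < n -> 'C(m, 2) < 'C(n, 2).
Proof.
move=> mn n1; case: m mn => [|m] mn.
  by rewrite bin0n bin_gt0.
apply: (@leq_trans 'C(m.+2, 2)); last exact: leq_bin2l.
by rewrite [X in _ < X]binS bin1; lia.
Qed.

Section Main.
Variables (T B : finType) (blk : B -> {set T}).

Definition Ed := [set pA : T * B | pA.1 \in blk pA.2].
Definition Dset (phi : B -> T) (u w : T) :=
  [set A | ((u \in blk A) && (phi A == w)) || ((w \in blk A) && (phi A == u))].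

Lemma nest_count (phi : B -> T) u w : (forall A, phi A \notin blk A) -> u != w ->
  #|[set A | (u \in phi A |: blk A) && (w \in phi A |: blk A)]| =
  #|[set A | (u \in blk A) && (w \in blk A)]| + #|Dset phi u w|.
Proof.
move=> nin uw.
have -> : [set A | (u \in phi A |: blk A) && (w \in phi A |: blk A)] =
   [set A | (u \in blk A) && (w \in blk A)] :|: Dset phi u w.
  apply/setP=> A; rewrite !inE.
  move: (phi A) (nin A) => z nz.
  case Hu: (u \in blk A); case Hw: (w \in blk A);
  case: (eqVneq z u) => Eu; case: (eqVneq z w) => Ew; subst => //=;
  rewrite ?eqxx ?Hu ?Hw //= in nz *;
  try by rewrite (negbTE uw) in Ew.
  by rewrite eqxx in uw.
rewrite (cardsU [set A | (u \in blk A) && (w \in blk A)] (Dset phi u w)).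
suff -> : [set A | (u \in blk A) && (w \in blk A)] :&: Dset phi u w = set0 by rewrite cards0 subn0.
apply/setP=> A; rewrite !inE.
have := nin A.
case Hu: (u \in blk A); case Hw: (w \in blk A) => //= Hn.
by apply/negbTE; apply/negP => /orP[]/eqP E; rewrite E ?Hu ?Hw in Hn.
Qed.

Lemma perfect_iff v k lam (phi : B -> T) : is_bibd blk v k lam ->
  perfect_nesting blk v k lam phi <->
  (forall A, phi A \notin blk A) /\ (forall u w, u != w -> #|Dset phi u w| = 1).
Proof.
case=> Tv Bk Bl; split.
  case=> nin [_ _ Hl]; split => // u w uw.
  have := Hl u w uw; rewrite nest_count // Bl // => /eqP.
  by rewrite -addn1 eqn_add2l => /eqP.
case=> nin D1; split => //; split => //.
  by move=> A; rewrite cardsU1 nin Bk add1n.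
by move=> u w uw; rewrite nest_count // Bl // D1 // addn1.
Qed.


Lemma D_of_edge (phi : B -> T) u w p A : p \in blk A ->
  [set p; phi A] = [set u; w] -> A \in Dset phi u w.
Proof.
move=> HpA /set2_eq [[<- <-]|[<- <-]]; rewrite inE HpA eqxx //= orbT //.
Qed.

Lemma edge_of_D (phi : B -> T) u w A : A \in Dset phi u w ->
  exists p, p \in blk A /\ [set p; phi A] = [set u; w].
Proof.
rewrite inE => /orP[]/andP[H /eqP E].
  by exists u; rewrite E.
by exists w; rewrite E setUC.
Qed.

Definition gpt (phi : B -> T) (pA : T * B) := [set pA.1; phi pA.2].

Lemma gpt_sub (phi : B -> T) : (forall A, phi A \notin blk A) ->
  [set gpt phi x | x in Ed] \subset P2 T.
Proof.
move=> nin; apply/subsetP=> S /imsetP[[p A] HpA ->]; rewrite inE in HpA.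
rewrite inE cards2 /=; case: (eqVneq p (phi A)) => [E|//].
by have := nin A; rewrite -E HpA.
Qed.

Lemma D_one_of_surj (phi : B -> T) : (forall A, phi A \notin blk A) ->
  #|Ed| = 'C(#|T|, 2) ->
  (forall u w, u != w -> exists p A, p \in blk A /\ [set p; phi A] = [set u; w]) ->
  forall u w, u != w -> #|Dset phi u w| = 1.
Proof.
move=> nin EdC surj.
have sup : P2 T \subset [set gpt phi x | x in Ed].
  apply/subsetP=> S; rewrite inE => /cards2P[u [w [uw ->]]].
  have [p [A [HpA E]]] := surj u w uw.
  by apply/imsetP; exists (p, A); rewrite ?inE // /gpt /= E.
have eqS : [set gpt phi x | x in Ed] = P2 T by apply/eqP; rewrite eqEsubset gpt_sub.
have inj : {in Ed &, injective (gpt phi)}.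
  by apply/imset_injP; rewrite eqS card_P2 EdC.
move=> u w uw; have [p [A [HpA E]]] := surj u w uw.
apply/eqP/cards1P; exists A; apply/setP => A'; rewrite inE; apply/idP/eqP.
  move=> /edge_of_D [p' [Hp' E']].
  have := inj (p', A') (p, A); rewrite !inE /gpt /= E E' => /(_ Hp' HpA erefl).
  by case.
by move=> ->; apply: D_of_edge HpA E.
Qed.

Lemma Ed_card_of_D (phi : B -> T) : (forall A, phi A \notin blk A) ->
  (forall u w, u != w -> #|Dset phi u w| = 1) -> #|Ed| = 'C(#|T|, 2).
Proof.
move=> nin D1.
have inj : {in Ed &, injective (gpt phi)}.
  move=> [p A] [p' A']; rewrite !inE /gpt /= => HpA HpA' E.
  have pn : p != phi A by apply/eqP=> E2; have := nin A; rewrite -E2 HpA.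
  have /cards1P [A0 HD] := introT eqP (D1 p (phi A) pn).
  have H1 : A \in Dset phi p (phi A) by apply: D_of_edge HpA erefl.
  have H2 : A' \in Dset phi p (phi A) by apply: D_of_edge HpA' (esym E).
  rewrite HD !inE in H1 H2; move/eqP: H1 => H1; move/eqP: H2 => H2; subst.
  case/set2_eq: E => [[-> _]|[E1 E2]] //.
  by have := nin A0; rewrite -E1 HpA.
have sup : P2 T \subset [set gpt phi x | x in Ed].
  apply/subsetP=> S; rewrite inE => /cards2P[u [w [uw ->]]].
  have /cards1P [A0 HD] := introT eqP (D1 u w uw).
  have : A0 \in Dset phi u w by rewrite HD inE.
  move=> /edge_of_D [p [HpA E]].
  by apply/imsetP; exists (p, A0); rewrite ?inE // /gpt /= E.
have eqS : [set gpt phi x | x in Ed] = P2 T by apply/eqP; rewrite eqEsubset gpt_sub.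
by rewrite -(card_in_imset inj) eqS card_P2.
Qed.

Lemma harm_H1 n (c : T + B -> 'I_n) : harmonious (levi_adj blk) c ->
  forall p A, p \in blk A -> c (inl p) != c (inr A).
Proof. by case=> H _ p A HpA; apply: H. Qed.

Lemma harm_H2 n (c : T + B -> 'I_n) : harmonious (levi_adj blk) c ->
  forall p A p' A', p \in blk A -> p' \in blk A' ->
  [set c (inl p); c (inr A)] = [set c (inl p'); c (inr A')] -> p = p' /\ A = A'.
Proof.
case=> _ H p A p' A' HpA HpA' E.
by case/set2_eq: (H (inl p) (inr A) (inl p') (inr A') HpA HpA' E) => [[[->] [->]]|[]].
Qed.

Definition gcol n (c : T + B -> 'I_n) (pA : T * B) := [set c (inl pA.1); c (inr pA.2)].

Lemma gcol_inj n (c : T + B -> 'I_n) : harmonious (levi_adj blk) c ->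
  {in Ed &, injective (gcol c)}.
Proof.
move=> hc [p A] [p' A']; rewrite !inE /gcol /= => HpA HpA' E.
by case: (harm_H2 hc HpA HpA' E) => -> ->.
Qed.

Lemma gcol_sub n (c : T + B -> 'I_n) : harmonious (levi_adj blk) c ->
  [set gcol c x | x in Ed] \subset P2 'I_n.
Proof.
move=> hc; apply/subsetP=> S /imsetP[[p A] HpA ->]; rewrite inE in HpA.
by rewrite inE cards2 /= (harm_H1 hc HpA).
Qed.

Lemma Ed_le_col n (c : T + B -> 'I_n) : harmonious (levi_adj blk) c ->
  #|Ed| <= 'C(n, 2).
Proof.
move=> hc; rewrite -(card_in_imset (gcol_inj hc)).
rewrite -[X in 'C(X, 2)]card_ord -card_P2 subset_leq_card // gcol_sub //.
Qed.

Lemma exact_H3 (c : T + B -> 'I_#|T|) : exact_colouring blk c ->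
  forall i j, i != j -> exists p A, p \in blk A /\ [set c (inl p); c (inr A)] = [set i; j].
Proof.
case=> _ Hx i j ij.
have /card_gt0P [E1] : 0 < #|[set E : {set T + B} | is_edge (levi_adj blk) E &&
                               ([set c u | u in E] == [set i; j])]| by rewrite Hx.
rewrite inE => /andP[/existsP[u /existsP[w /andP[euw /eqP ->]]] /eqP].
rewrite imset_set2.
case: u w euw => [p|A] [q|A'] //= H E.
  by exists p, A'.
by exists q, A; rewrite setUC.
Qed.

Lemma Ed_eq_col (c : T + B -> 'I_#|T|) : exact_colouring blk c ->
  #|Ed| = 'C(#|T|, 2).
Proof.
move=> ec; have hc := ec.1.
rewrite -(card_in_imset (gcol_inj hc)).
suff -> : [set gcol c x | x in Ed] = P2 'I_#|T| by rewrite card_P2 card_ord.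
apply/eqP; rewrite eqEsubset gcol_sub //=.
apply/subsetP=> S; rewrite inE => /cards2P[i [j [ij ->]]].
have [p [A [HpA E]]] := exact_H3 ec ij.
by apply/imsetP; exists (p, A); rewrite ?inE // /gcol /= E.
Qed.


Lemma norm_edge (u w : T + B) : levi_adj blk u w ->
  exists p A, p \in blk A /\ [set u; w] = [set inl p; inr A].
Proof.
case: u w => [p|A] [q|A'] //= H.
  by exists p, A'.
by exists q, A; rewrite setUC.
Qed.

Lemma uniq_edge (phi : B -> T) : (forall A, phi A \notin blk A) ->
  (forall u w, u != w -> #|Dset phi u w| = 1) ->
  forall p A p' A', p \in blk A -> p' \in blk A' ->
  [set p; phi A] = [set p'; phi A'] -> p = p' /\ A = A'.
Proof.
move=> nin D1 p A p' A' HpA HpA' E.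
have pn : p != phi A by apply/eqP=> E2; have := nin A; rewrite -E2 HpA.
have /cards1P [A0 HD] := introT eqP (D1 p (phi A) pn).
have H1 : A \in Dset phi p (phi A) by apply: D_of_edge HpA erefl.
have H2 : A' \in Dset phi p (phi A) by apply: D_of_edge HpA' (esym E).
rewrite HD !inE in H1 H2; move/eqP: H1 => H1; move/eqP: H2 => H2; subst.
case/set2_eq: E => [[-> _]|[E1 E2]] //.
by have := nin A0; rewrite -E1 HpA.
Qed.

Lemma forward v k lam (phi : B -> T) : is_bibd blk v k lam ->
  perfect_nesting blk v k lam phi -> banff blk /\ has_exact_colouring blk.
Proof.
move=> bib /(perfect_iff phi bib) [nin D1].
pose c := fun z : T + B => match z with inl x => enum_rank x | inr A => enum_rank (phi A) end.
have pn : forall p A, p \in blk A -> p != phi A.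
  by move=> p A HpA; apply/eqP=> E2; have := nin A; rewrite -E2 HpA.
have cset : forall p A, [set c (inl p); c (inr A)] = [set enum_rank x | x in [set p; phi A]].
  by move=> p A; rewrite imset_set2.
have back : forall (S S' : {set T}), [set enum_rank x | x in S] = [set enum_rank x | x in S'] -> S = S'.
  move=> S S' E; apply/setP=> x.
  by rewrite -(mem_imset S x enum_rank_inj) E mem_imset //; exact: enum_rank_inj.
have hc : harmonious (levi_adj blk) c.
  split.
    case=> [p|A] [q|A'] //= H.
      by rewrite (inj_eq enum_rank_inj) pn.
    by rewrite (inj_eq enum_rank_inj) eq_sym pn.
  move=> u1 w1 u2 w2 e1 e2.
  have [p [A [HpA E1]]] := norm_edge e1.
  have [p' [A' [HpA' E2]]] := norm_edge e2.
  rewrite -!imset_set2 E1 E2 !imset_set2 !cset => /back E.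
  by case: (uniq_edge nin D1 HpA HpA' E) => -> ->.
split; last first.
  exists c; split => // i j ij.
  have uw : enum_val i != enum_val j by rewrite (inj_eq enum_val_inj).
  have /cards1P [A0 HD] := introT eqP (D1 _ _ uw).
  have : A0 \in Dset phi (enum_val i) (enum_val j) by rewrite HD inE.
  move=> /edge_of_D [p0 [Hp0 E0]].
  apply/eqP/cards1P; exists [set inl p0; inr A0]; apply/setP=> E; rewrite !inE.
  apply/idP/eqP.
    case/andP=> /existsP[u /existsP[w /andP[euw /eqP ->]]] /eqP.
    have [p [A [HpA ->]]] := norm_edge euw.
    rewrite imset_set2 cset => Ec.
    have : [set p; phi A] = [set p0; phi A0].
      apply: back; rewrite Ec E0 imset_set2 !enum_valK //.
    by case/(uniq_edge nin D1 HpA Hp0) => -> ->.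
  move=> ->; apply/andP; split.
    by apply/existsP; exists (inl p0); apply/existsP; exists (inr A0); rewrite /= Hp0 eqxx.
  by rewrite imset_set2 cset E0 imset_set2 !enum_valK.
split; first by exists c.
move=> m mT [c' hc'].
case: (ltnP 1 #|T|) => T2.
  have := Ed_le_col hc'; rewrite (Ed_card_of_D nin D1).
  by rewrite leqNgt bin2_lt.
have m0 : m = 0 by lia.
subst m.
have /card_gt0P [x _] : 0 < #|T| by lia.
by case: (c' (inl x)).
Qed.

End Main.

Section Degen.
Variables (T B : finType) (blk : B -> {set T}) (lam : nat) (c : T + B -> 'I_#|T|).
Hypothesis Bl : forall x y, x != y -> #|[set A | (x \in blk A) && (y \in blk A)]| = lam.
Hypothesis ec : exact_colouring blk c.
Variables x0 y0 : T.
Hypothesis xy : x0 != y0.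
Hypothesis cxy : c (inl x0) = c (inl y0).

Local Notation cp p := (c (inl p)).
Local Notation cb A := (c (inr A)).

Let H1 := harm_H1 ec.1.
Let H2 := harm_H2 ec.1.
Let H3 := exact_H3 ec.

Lemma no_share A p q : p \in blk A -> q \in blk A -> p = q.
Proof.
move=> Hp Hq; case: (eqVneq p q) => // pq.
have l0 : lam = 0.
  rewrite -(Bl xy); apply/eqP; rewrite cards_eq0; apply/eqP/setP=> A'; rewrite !inE.
  apply/negP => /andP[h1 h2].
  have [E _] : x0 = y0 /\ A' = A' by apply: H2 h1 h2 _; rewrite cxy.
  by move: xy; rewrite E eqxx.
have := Bl pq; rewrite l0 => /cards0_eq /setP /(_ A).
by rewrite !inE Hp Hq.
Qed.

Lemma ex_a0 : exists a0, forall p, cp p != a0.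
Proof.
case: (boolP [exists a0, [forall p, cp p != a0]]) => [/existsP[a0 /forallP H]|H].
  by exists a0.
exfalso.
have sur : forall a, exists p, cp p = a.
  move=> a; move: H; rewrite negb_exists => /forallP /(_ a).
  by rewrite negb_forall => /existsP [p]; rewrite negbK => /eqP; exists p.
have inj : {in [set: T] &, injective (fun p => cp p)}.
  apply/imset_injP.
  have -> : [set cp p | p in [set: T]] = [set: 'I_#|T|].
    apply/setP=> a; rewrite inE; have [p <-] := sur a.
    by apply: imset_f; rewrite inE.
  by rewrite !cardsT card_ord.
have := inj x0 y0; rewrite !inE => /(_ erefl erefl cxy) E.
by move: xy; rewrite E eqxx.
Qed.

Variable a0 : 'I_#|T|.
Hypothesis a0u : forall p, cp p != a0.

Lemma used_of_ne d : d != a0 -> exists p A, [/\ p \in blk A, cp p = d & cb A = a0].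
Proof.
move=> da; have [p [A [HpA E]]] := H3 da.
case/set2_eq: E => [[E1 E2]|[E1 E2]]; first by exists p, A.
by have := a0u p; rewrite E1 eqxx.
Qed.

Definition cp' p := if p == y0 then a0 else cp p.

Lemma cp'y : cp' y0 = a0. Proof. by rewrite /cp' eqxx. Qed.
Lemma cp'ne p : p != y0 -> cp' p = cp p. Proof. by rewrite /cp' => /negbTE ->. Qed.

Lemma cp'_sur d : exists p, cp' p = d.
Proof.
case: (eqVneq d a0) => [->|da]; first by exists y0; rewrite cp'y.
have [p [A [_ Ep _]]] := used_of_ne da.
case: (eqVneq p y0) => [py|py].
  by exists x0; rewrite cp'ne // cxy -py.
by exists p; rewrite cp'ne.
Qed.

Lemma cp'_inj : injective cp'.
Proof.
have inj : {in [set: T] &, injective cp'}.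
  apply/imset_injP.
  have -> : [set cp' p | p in [set: T]] = [set: 'I_#|T|].
    apply/setP=> a; rewrite inE; have [p <-] := cp'_sur a.
    by apply: imset_f; rewrite inE.
  by rewrite !cardsT card_ord.
by move=> x y; apply: inj; rewrite inE.
Qed.

Lemma col_a p : cp p = cp x0 -> p = x0 \/ p = y0.
Proof.
move=> E; case: (eqVneq p y0) => [->|py]; first by right.
left; apply: cp'_inj; rewrite !cp'ne //.
Qed.

Definition sig' d := odflt y0 [pick p | cp' p == d].

Lemma sig'K d : cp' (sig' d) = d.
Proof.
rewrite /sig'; case: pickP => [p /eqP //|H].
by have [p Hp] := cp'_sur d; have := H p; rewrite Hp eqxx.
Qed.

Lemma sig'_cp p : p != y0 -> sig' (cp p) = p.
Proof. by move=> py; apply: cp'_inj; rewrite sig'K cp'ne. Qed.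

Definition pt A := odflt x0 [pick p in blk A].

Lemma pt_spec A p : p \in blk A -> pt A = p.
Proof.
move=> Hp; rewrite /pt; case: pickP => [q Hq|H] /=; first exact: no_share Hq Hp.
by have := H p; rewrite Hp.
Qed.

Definition Y p := [exists A', (y0 \in blk A') && (cb A' == cp p)].

Lemma Y_x0 : ~~ Y x0.
Proof.
apply/existsP => [[A' /andP[h /eqP e]]].
by have := H1 h; rewrite e cxy eqxx.
Qed.

Definition phi A := if cb A != a0 then sig' (cb A)
                    else if (pt A == y0) || Y (pt A) then x0 else y0.

Lemma phi_col A : cb A != a0 -> phi A = sig' (cb A).
Proof. by rewrite /phi => ->. Qed.

Lemma phi_a0 A p : cb A = a0 -> p \in blk A ->
  phi A = if (p == y0) || Y p then x0 else y0.
Proof. by rewrite /phi => -> Hp; rewrite eqxx /= (pt_spec Hp). Qed.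

Lemma nin A : phi A \notin blk A.
Proof.
apply/negP => H; have Hpt := pt_spec H.
move: H Hpt; rewrite /phi; case: ifP => cbn.
  move=> H _; move: (sig'K (cb A)) H; set q := sig' (cb A) => Eq H.
  case: (eqVneq q y0) => [qy|qy].
    by move: Eq; rewrite qy cp'y => E; rewrite E eqxx in cbn.
  by have := H1 H; rewrite -Eq cp'ne // eqxx.
case: ifP => cond H Hpt; rewrite Hpt in cond.
  by move: cond; rewrite (negbTE xy) /= (negbTE Y_x0).
by rewrite eqxx in cond.
Qed.

Lemma keyA u w p A : u != w -> u != y0 -> w != y0 -> p \in blk A ->
  cp p = cp u -> cb A = cp w ->
  exists p A, p \in blk A /\ [set p; phi A] = [set u; w].
Proof.
move=> uw uy wy HpA Ep EA.
have cbA : cb A != a0 by rewrite EA a0u.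
have phiA : phi A = w by rewrite phi_col // EA sig'_cp.
case: (eqVneq p y0) => [py|py]; last first.
  exists p, A; split => //; rewrite phiA; congr [set _; _].
  by apply: cp'_inj; rewrite !cp'ne.
subst p.
have ux : u = x0 by case: (col_a (etrans (esym Ep) (esym cxy))) => // E; rewrite E eqxx in uy.
subst u.
have [p' [A' [Hp' Ep' EA']]] := used_of_ne (a0u w).
have p'y : p' != y0.
  apply/eqP=> E; subst p'.
  case: (col_a (etrans (esym Ep') (esym cxy))) => E.
    by move: uw; rewrite E eqxx.
  by move: wy; rewrite E eqxx.
have p'w : p' = w by apply: cp'_inj; rewrite !cp'ne.
subst p'.
have Yw : Y w by apply/existsP; exists A; rewrite HpA EA eqxx.
exists w, A'; split => //.
by rewrite (phi_a0 EA' Hp') Yw orbT setUC.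
Qed.

Lemma caseY0 w : w != y0 -> exists p A, p \in blk A /\ [set p; phi A] = [set y0; w].
Proof.
move=> wy; case: (eqVneq w x0) => [->|wx].
  have [p [A [HpA Ep EA]]] := used_of_ne (a0u x0).
  case: (col_a Ep) => E; subst p.
    exists x0, A; split => //.
    by rewrite (phi_a0 EA HpA) (negbTE xy) (negbTE Y_x0) setUC.
  by exists y0, A; rewrite (phi_a0 EA HpA) eqxx.
have cwa : cp w != cp x0.
  by apply/eqP => /col_a [] E; [rewrite E eqxx in wx | rewrite E eqxx in wy].
case Yw : (Y w).
  move/existsP: Yw => [A' /andP[h /eqP e]].
  exists y0, A'; split => //.
  by rewrite phi_col ?e ?a0u // sig'_cp.
have [p' [A' [Hp' Ep' EA']]] := used_of_ne (a0u w).
have p'y : p' != y0.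
  by apply/eqP=> E; subst p'; rewrite -Ep' -cxy eqxx in cwa.
have p'w : p' = w by apply: cp'_inj; rewrite !cp'ne.
subst p'.
exists w, A'; split => //.
by rewrite (phi_a0 EA' Hp') (negbTE wy) Yw setUC.
Qed.

Lemma surj u w : u != w -> exists p A, p \in blk A /\ [set p; phi A] = [set u; w].
Proof.
move=> uw.
case: (eqVneq u y0) => [uy|uy]; case: (eqVneq w y0) => [wy|wy].
- by subst; rewrite eqxx in uw.
- by subst u; apply: caseY0.
- by subst w; rewrite setUC; apply: caseY0.
have cuw : cp u != cp w.
  by apply/eqP=> E; have := cp'_inj (etrans (cp'ne uy) (etrans E (esym (cp'ne wy)))) ; apply/eqP.
have [p [A [HpA E]]] := H3 cuw.
case/set2_eq: E => [[E1 E2]|[E1 E2]].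
  exact: keyA uw uy wy HpA E1 E2.
rewrite setUC; apply: keyA HpA E1 E2 => //; by rewrite eq_sym.
Qed.

End Degen.

Lemma converse (T B : finType) (blk : B -> {set T}) (v k lam : nat) :
  is_bibd blk v k lam -> has_exact_colouring blk -> has_perfect_nesting blk v k lam.
Proof.
move=> bib [c ec]; have EdC := Ed_eq_col ec.
suff [phi0 [nin0 surj0]] : exists phi0 : B -> T, (forall A, phi0 A \notin blk A) /\
  (forall u w, u != w -> exists p A, p \in blk A /\ [set p; phi0 A] = [set u; w]).
  exists phi0; apply/(perfect_iff phi0 bib); split => //.
  exact: D_one_of_surj.
have H1 := harm_H1 ec.1; have H3 := exact_H3 ec.
case: (boolP (injectiveb (fun p => c (inl p)))) => [/injectiveP inj | /injectivePn [x0 [y0 xy cxy]]].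
  have [sg K1 K2] := inj_card_bij inj (eq_leq (card_ord #|T|)).
  exists (fun A => sg (c (inr A))); split.
    move=> A; apply/negP => H; have := H1 _ _ H.
    by rewrite K2 eqxx.
  move=> u w uw.
  have cuw : c (inl u) != c (inl w) by rewrite (inj_eq inj).
  have [p [A [HpA E]]] := H3 _ _ cuw.
  exists p, A; split => //.
  case/set2_eq: E => [[E1 E2]|[E1 E2]].
    by rewrite E2 K1 (inj _ _ E1).
  by rewrite E2 K1 (inj _ _ E1) setUC.
case: bib => _ _ Bl.
have [a0 a0u] := ex_a0 xy cxy.
exists (phi blk c x0 y0 a0); split.
  exact: (nin Bl ec xy cxy a0u).
move=> u w; exact: (surj Bl ec xy cxy a0u).
Qed.

Theorem theorem5p2 (T B : finType) (blk : B -> {set T}) (v k lam : nat) :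
  is_bibd blk v k lam ->
  (has_perfect_nesting blk v k lam <-> (banff blk /\ has_exact_colouring blk)).
Proof.
move=> bib; split.
  by case=> phi0 /(forward bib).
by case=> _; apply: converse bib.
Qed.
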